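(* Let $A,B\in\mathcal{M}_d(\mathbb{C})$ with $\operatorname{diag}(A)=\operatorname{diag}(B)$, such that $A$ is entrywise nonnegative, $B$ is positive semidefinite, and $A_{ij}A_{ji}\ge|B_{ij}|^2$ for all $i,j$. If moreover $B$ is diagonally dominant, then $(A,B)\in\mathsf{PCP}_d^2$.
   Context: $B$ is diagonally dominant if $|B_{ii}|\ge\sum_{j\ne i}|B_{ij}|$ and $|B_{ii}|\ge\sum_{j\ne i}|B_{ji}|$ for all $i$. For $v\in\mathbb{C}^d$, $\sigma(v)$ is the number of nonzero coordinates; $\odot$ is the entrywise product, $\bar v$ the entrywise conjugate. $(A,B)\in\mathsf{PCP}_d^2$ means there are finitely many vectors $v_n,w_n\in\mathbb{C}^d$ with $\sigma(v_n\odot w_n)\le2$ for all $n$, $A=\sum_n|v_n\odot\bar v_n\rangle\langle w_n\odot\bar w_n|$ and $B=\sum_n|v_n\odot w_n\rangle\langle v_n\odot w_n|$. *)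

(* Defs.v *)
(* Complex numbers are modelled as R[i] (mathcomp-real-closed
   complex) over an arbitrary R : realType (a model of the reals). *)
From HB Require Import structures.
From mathcomp Require Import all_boot all_order all_algebra.
From mathcomp Require Import complex.
From mathcomp Require Import reals.
Set Implicit Arguments. Unset Strict Implicit. Unset Printing Implicit Defensive.
Import Order.TTheory GRing.Theory Num.Theory.
Local Open Scope ring_scope.

Section Defs.
Variable C : numClosedFieldType.
Variable d : nat.

Definition hadv (v w : 'cV[C]_d) : 'cV[C]_d := \col_i (v i 0 * w i 0).
Definition conjv (v : 'cV[C]_d) : 'cV[C]_d := \col_i (v i 0)^*.
Definition ketbra (x y : 'cV[C]_d) : 'M[C]_d := x *m (conjv y)^T.
Definition sigma (v : 'cV[C]_d) : nat := #|[set i | v i 0 != 0]|.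

Definition diag_dominant (B : 'M[C]_d) : Prop :=
  forall i : 'I_d,
    \sum_(j < d | j != i) `|B i j| <= `|B i i| /\
    \sum_(j < d | j != i) `|B j i| <= `|B i i|.

Definition entrywise_nonneg (A : 'M[C]_d) : Prop := forall i j, 0 <= A i j.

(* positive semidefinite: x^dagger B x >= 0 (in particular real) for all x *)
Definition psd (B : 'M[C]_d) : Prop :=
  forall x : 'cV[C]_d, 0 <= ((conjv x)^T *m B *m x) 0 0.

Definition PCP2 (A B : 'M[C]_d) : Prop :=
  exists s : seq ('cV[C]_d * 'cV[C]_d),
    (forall p, p \in s -> (sigma (hadv p.1 p.2) <= 2)%N) /\
    A = \sum_(p <- s) ketbra (hadv p.1 (conjv p.1)) (hadv p.2 (conjv p.2)) /\
    B = \sum_(p <- s) ketbra (hadv p.1 p.2) (hadv p.1 p.2).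
End Defs.

(* Main.v *)
Require Import Defs.
From HB Require Import structures.
From mathcomp Require Import all_boot all_order all_algebra.
From mathcomp Require Import complex.
From mathcomp Require Import reals.
From mathcomp Require Import ring.
Import Order.TTheory GRing.Theory Num.Theory.
Local Open Scope ring_scope.

Section Gen.
Variable C : numClosedFieldType.
Variable d : nat.
Implicit Types (A B : 'M[C]_d) (v w : 'cV[C]_d).

Lemma PCP2_0 : PCP2 (0 : 'M[C]_d) 0.
Proof. by exists [::]; rewrite !big_nil. Qed.

Lemma PCP2_add A1 B1 A2 B2 : PCP2 A1 B1 -> PCP2 A2 B2 -> PCP2 (A1 + A2) (B1 + B2).
Proof.
move=> [s1 [h1 [-> ->]]] [s2 [h2 [-> ->]]].
exists (s1 ++ s2); split; last by rewrite !big_cat.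
by move=> p; rewrite mem_cat => /orP[/h1|/h2].
Qed.

Lemma PCP2_sum (I : finType) (F G : I -> 'M[C]_d) :
  (forall i, PCP2 (F i) (G i)) -> PCP2 (\sum_i F i) (\sum_i G i).
Proof.
move=> h; apply: (big_rec2 (fun x y => PCP2 x y)); first exact: PCP2_0.
by move=> i x y _; apply: PCP2_add.
Qed.

Lemma ketbraE (x y : 'cV[C]_d) k l : ketbra x y k l = x k 0 * (y l 0)^*.
Proof. by rewrite !mxE big_ord1 !mxE. Qed.

Lemma sigma_le2 v i j : (forall k, k != i -> k != j -> v k 0 = 0) -> (sigma v <= 2)%N.
Proof.
move=> h; rewrite /sigma.
apply: (leq_trans (subset_leq_card (B := [set i; j]) _)).
  apply/subsetP => k; rewrite !inE => nz.
  by apply: contraT => /norP[/h H /H e]; rewrite e eqxx in nz.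
by rewrite cards2; case: (i != j).
Qed.

Lemma PCP2_one v w : (sigma (hadv v w) <= 2)%N ->
  PCP2 (ketbra (hadv v (conjv v)) (hadv w (conjv w))) (ketbra (hadv v w) (hadv v w)).
Proof.
move=> h; exists [:: (v, w)]; split; last by rewrite !big_seq1.
by move=> p; rewrite inE => /eqP ->.
Qed.

Lemma sqrtC_conj (x : C) : 0 <= x -> sqrtC x * (sqrtC x)^* = x.
Proof. by move=> x0; rewrite geC0_conj ?sqrtC_ge0 // -expr2 sqrtCK. Qed.

Lemma PCP2_diag (k : 'I_d) (x : C) : 0 <= x ->
  PCP2 (x *: delta_mx k k) (x *: delta_mx k k).
Proof.
move=> x0.
pose v : 'cV[C]_d := \col_m (if m == k then sqrtC x else 0).
pose w : 'cV[C]_d := \col_m (if m == k then 1 else 0).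
have eA : x *: delta_mx k k = ketbra (hadv v (conjv v)) (hadv w (conjv w)).
  apply/matrixP => m n; rewrite ketbraE !mxE.
  by case: (eqVneq m k) => [_|mk]; case: (eqVneq n k) => [_|nk];
   rewrite /= ?mulr0 ?mul0r ?mulr1 ?conjC0 ?conjC1 ?mulr1 ?sqrtC_conj ?conjC1 ?mulr1 ?mulr0.
have eB : x *: delta_mx k k = ketbra (hadv v w) (hadv v w).
  apply/matrixP => m n; rewrite ketbraE !mxE.
  by case: (eqVneq m k) => [_|mk]; case: (eqVneq n k) => [_|nk];
   rewrite /= ?mulr0 ?mul0r ?mulr1 ?conjC0 ?conjC1 ?mulr1 ?sqrtC_conj ?conjC1 ?mulr1 ?mulr0.
have := PCP2_one v w; rewrite -eA -eB; apply.
apply: (sigma_le2 _ k k) => m mk _.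
by rewrite !mxE (negbTE mk) mul0r.
Qed.

Lemma PCP2_off (i j : 'I_d) (c a a' : C) : i != j -> 0 <= a -> 0 <= a' ->
  `|c| ^+ 2 <= a * a' ->
  PCP2 (`|c| *: (delta_mx i i + delta_mx j j) + a *: delta_mx i j + a' *: delta_mx j i)
       (`|c| *: (delta_mx i i + delta_mx j j) + c *: delta_mx i j + c^* *: delta_mx j i).
Proof.
move=> ij a0 a'0 hle.
have ji : j != i by rewrite eq_sym.
set be := `|c|.
have be0 : 0 <= be by apply: normr_ge0.
have ha : a = 0 -> c = 0.
  move=> e; move: hle; rewrite e mul0r => h.
  have : `|c| ^+ 2 = 0 by apply/eqP; rewrite eq_le h /=; apply: exprn_ge0; apply: normr_ge0.
  by move/eqP; rewrite sqrf_eq0 normr_eq0 => /eqP.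
have hb : be = 0 -> c = 0 by move/eqP; rewrite normr_eq0 => /eqP.
pose mu := sqrtC (be / a).
pose s := sqrtC a.
pose r := c / sqrtC be.
pose b := be ^+ 2 / a.
have F1 : r * r^* = be.
  have [e|nz] := eqVneq be 0; first by rewrite /r (hb e) mul0r conjC0 mul0r e.
  have sc : (sqrtC be)^* = sqrtC be by rewrite geC0_conj // sqrtC_ge0.
  have cc : c * c^* = be ^+ 2 by rewrite normCK.
  have sq := sqrtCK be.
  rewrite /r rmorphM /= fmorphV /= sc mulrACA cc -invfM -expr2 sq.
  by rewrite expr2 -mulrA divff ?mulr1.
have Fmu : mu * mu^* = be / a by apply: sqrtC_conj; apply: divr_ge0.
have Fs : s * s^* = a by apply: sqrtC_conj.
have F2 : be / a * a = be.
  have [e|nz] := eqVneq a 0; first by rewrite e mulr0 /be (ha e) normr0.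
  by rewrite -mulrA mulVf ?mulr1.
have Fms : mu * s = sqrtC be.
  by rewrite /mu /s -sqrtCM ?F2 // qualifE /= ?divr_ge0.
have F3 : r * (mu * s)^* = c.
  rewrite Fms geC0_conj ?sqrtC_ge0 //.
  have [e|nz] := eqVneq be 0; first by rewrite /r (hb e) !mul0r.
  by rewrite /r -mulrA mulVf ?mulr1 // sqrtC_eq0.
have Fb : 0 <= a' - b.
  rewrite subr_ge0 /b.
  have [e|nz] := eqVneq a 0; first by rewrite e invr0 mulr0.
  have ap : 0 < a by rewrite lt_def nz a0.
  by rewrite ler_pdivrMr // mulrC.
have cbe : be^* = be by rewrite geC0_conj.
have ca : a^* = a by rewrite geC0_conj.
pose v1 : 'cV[C]_d := \col_m (if m == i then 1 else if m == j then mu else 0).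
pose w1 : 'cV[C]_d := \col_m (if m == i then r else if m == j then s else 0).
pose v2 : 'cV[C]_d := \col_m (if m == j then sqrtC (a' - b) else 0).
pose w2 : 'cV[C]_d := \col_m (if m == i then 1 else 0).
have eA : `|c| *: (delta_mx i i + delta_mx j j) + a *: delta_mx i j + a' *: delta_mx j i
  = ketbra (hadv v1 (conjv v1)) (hadv w1 (conjv w1)) + ketbra (hadv v2 (conjv v2)) (hadv w2 (conjv w2)).
  apply/matrixP => m n; rewrite [RHS]mxE !ketbraE !mxE.
  case: (eqVneq m i) => [em|mi]; [subst m | case: (eqVneq m j) => [em|mj]; try subst m];
  (case: (eqVneq n i) => [en|ni]; [subst n | case: (eqVneq n j) => [en|nj]; try subst n]);
  rewrite /= ?eqxx ?(negbTE ij) ?(negbTE ji) ?(negbTE mi) ?(negbTE mj) ?(negbTE ni) ?(negbTE nj) /=;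
  rewrite ?(mulr1n, mulr0n, conjC0, conjC1, mulr0, mul0r, mulr1, mul1r, addr0, add0r).
  all: rewrite ?F1 ?Fs ?Fmu ?sqrtC_conj // ?cbe ?ca ?F2 //.
  by rewrite /b expr2 mulrAC addrC subrK.
have F3' : mu * s * r^* = c^*.
  by rewrite -F3 !rmorphM /= !conjCK mulrC.
have eB : `|c| *: (delta_mx i i + delta_mx j j) + c *: delta_mx i j + c^* *: delta_mx j i
  = ketbra (hadv v1 w1) (hadv v1 w1) + ketbra (hadv v2 w2) (hadv v2 w2).
  apply/matrixP => m n; rewrite [RHS]mxE !ketbraE !mxE.
  case: (eqVneq m i) => [em|mi]; [subst m | case: (eqVneq m j) => [em|mj]; try subst m];
  (case: (eqVneq n i) => [en|ni]; [subst n | case: (eqVneq n j) => [en|nj]; try subst n]);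
  rewrite /= ?eqxx ?(negbTE ij) ?(negbTE ji) ?(negbTE mi) ?(negbTE mj) ?(negbTE ni) ?(negbTE nj) /=;
  rewrite ?(mulr1n, mulr0n, conjC0, conjC1, mulr0, mul0r, mulr1, mul1r, addr0, add0r).
  all: rewrite ?F1 ?F3 ?F3' ?Fms ?sqrtC_conj //.
rewrite eA eB; apply: PCP2_add; apply: PCP2_one; apply: (sigma_le2 _ i j) => k ki kj;
  by rewrite !mxE (negbTE ki) (negbTE kj) ?mulr0 ?mul0r.
Qed.

Lemma sum2 (f : 'I_d -> C) (i j : 'I_d) : i != j -> (forall k, k != i -> k != j -> f k = 0) ->
  \sum_k f k = f i + f j.
Proof.
move=> ij h; rewrite (bigD1 i) //= (bigD1 j) ?(eq_sym j) //= big1 ?addr0 // => k /andP[kj ki].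
exact: h.
Qed.

Lemma sum1 (f : 'I_d -> C) (i : 'I_d) : (forall k, k != i -> f k = 0) -> \sum_k f k = f i.
Proof. by move=> h; rewrite (bigD1 i) //= big1 ?addr0. Qed.

Lemma form2 B (x : 'cV[C]_d) (i j : 'I_d) : i != j -> (forall k, k != i -> k != j -> x k 0 = 0) ->
  ((conjv x)^T *m B *m x) 0 0 =
  (x i 0)^* * B i i * x i 0 + (x i 0)^* * B i j * x j 0 +
  (x j 0)^* * B j i * x i 0 + (x j 0)^* * B j j * x j 0.
Proof.
move=> ij h; rewrite mxE (sum2 _ _ _ ij) => [|k ki kj]; last by rewrite h // mulr0.
rewrite !mxE (sum2 _ _ _ ij) => [|k ki kj]; last by rewrite !mxE h // conjC0 mul0r.
rewrite (sum2 _ _ _ ij) => [|k ki kj]; last by rewrite !mxE h // conjC0 mul0r.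
rewrite !mxE; rewrite !mulrDl; rewrite -!addrA; congr (_ + _); rewrite !addrA; congr (_ + _).
by rewrite addrC.
Qed.

Lemma form1 B (x : 'cV[C]_d) (i : 'I_d) : (forall k, k != i -> x k 0 = 0) ->
  ((conjv x)^T *m B *m x) 0 0 = (x i 0)^* * B i i * x i 0.
Proof.
move=> h; rewrite mxE (sum1 _ i) => [|k ki]; last by rewrite h // mulr0.
rewrite !mxE (sum1 _ i) => [|k ki]; last by rewrite !mxE h // conjC0 mul0r.
by rewrite !mxE.
Qed.

Lemma psd_diag B : psd B -> forall i, 0 <= B i i.
Proof.
move=> hB i; have := hB (\col_m (if m == i then 1 else 0)).
rewrite (form1 _ _ i) => [|k ki]; last by rewrite mxE (negbTE ki).
by rewrite !mxE eqxx conjC1 mul1r mulr1.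
Qed.

Lemma herm_alg (R : comNzRingType) (I u w p q P Q : R) : I ^+ 2 = -1 ->
  u + P + Q + w = u + p + q + w ->
  u + P * - I + I * Q + I * w * - I = u + p * I + - I * q + - I * w * I ->
  (Q - p) *+ 2 = 0.
Proof.
move=> hI e1 e2.
have -> : (Q - p) *+ 2 = ((u + P + Q + w) - (u + p + q + w))
   - I * ((u + P * - I + I * Q + I * w * - I) - (u + p * I + - I * q + - I * w * I))
   + (I ^+ 2 + 1) * (Q - P - p + q) by ring.
by rewrite e1 e2 hI !subrr addNr !mulr0 mul0r subr0 addr0.
Qed.

Lemma psd_herm B : psd B -> forall i j, B j i = (B i j)^*.
Proof.
move=> hB i j; have [<-|ij] := eqVneq i j; first by rewrite geC0_conj ?psd_diag.
have ji : j != i by rewrite eq_sym.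
have cu : (B i i)^* = B i i by rewrite geC0_conj ?psd_diag.
have cw : (B j j)^* = B j j by rewrite geC0_conj ?psd_diag.
have h1 := hB (\col_m (if m == i then 1 else if m == j then 1 else 0)).
rewrite (form2 _ _ _ _ ij) in h1 => [|k ki kj]; last by rewrite mxE (negbTE ki) (negbTE kj).
rewrite !mxE eqxx (negbTE ji) eqxx conjC1 !mul1r !mulr1 in h1.
have h2 := hB (\col_m (if m == i then 1 else if m == j then 'i else 0)).
rewrite (form2 _ _ _ _ ij) in h2 => [|k ki kj]; last by rewrite mxE (negbTE ki) (negbTE kj).
rewrite !mxE eqxx (negbTE ji) eqxx conjC1 !mul1r !mulr1 in h2.
move/geC0_conj: h1; move/geC0_conj: h2.
rewrite !rmorphD /= !rmorphM /= cu cw conjCi rmorphN /= conjCi opprK.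
move=> e2 e1.
have := @herm_alg _ _ _ _ _ _ _ _ (sqrCi C) e1 e2.
move/eqP; rewrite mulrn_eq0 /= subr_eq0 => /eqP <-.
by rewrite conjCK.
Qed.

Lemma dsumE (s : 'I_d -> 'I_d -> C) (f g : 'I_d -> 'I_d -> 'I_d) m n :
  (\sum_i \sum_j s i j *: delta_mx (f i j) (g i j)) m n =
  \sum_i \sum_j s i j * ((m == f i j) && (n == g i j))%:R.
Proof.
rewrite summxE; apply: eq_bigr => i _; rewrite summxE; apply: eq_bigr => j _.
by rewrite !mxE.
Qed.

Lemma nb {a b : 'I_d} : a != b -> (b == a) = false.
Proof. by rewrite eq_sym => /negbTE. Qed.

Lemma L_a (s : 'I_d -> 'I_d -> C) m n :
  (\sum_i \sum_j s i j *: delta_mx i i) m n = (\sum_j s m j) * (n == m)%:R.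
Proof.
rewrite (dsumE s (fun i j => i) (fun i j => i)).
rewrite (eq_bigr (fun i => (\sum_j s i j) * ((m == i) && (n == i))%:R)) => [|i _];
  last by rewrite mulr_suml.
rewrite (sum1 (fun i => (\sum_j s i j) * ((m == i) && (n == i))%:R) m) => [|i im].
  by rewrite eqxx.
by rewrite (nb im) /= mulr0.
Qed.

Lemma L_b (s : 'I_d -> 'I_d -> C) m n :
  (\sum_i \sum_j s i j *: delta_mx j j) m n = (\sum_i s i m) * (n == m)%:R.
Proof.
rewrite (dsumE s (fun i j => j) (fun i j => j)) exchange_big /=.
rewrite (eq_bigr (fun j => (\sum_i s i j) * ((m == j) && (n == j))%:R)) => [|j _];
  last by rewrite mulr_suml.
rewrite (sum1 (fun j => (\sum_i s i j) * ((m == j) && (n == j))%:R) m) => [|j jm].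
  by rewrite eqxx.
by rewrite (nb jm) /= mulr0.
Qed.

Lemma L_c (s : 'I_d -> 'I_d -> C) m n :
  (\sum_i \sum_j s i j *: delta_mx i j) m n = s m n.
Proof.
rewrite (dsumE s (fun i j => i) (fun i j => j)) /=.
rewrite (sum1 (fun i => \sum_j s i j * ((m == i) && (n == j))%:R) m) => [|i im].
  rewrite (sum1 _ n) => [|j jn]; first by rewrite !eqxx mulr1.
  by rewrite (nb jn) andbF mulr0.
by rewrite big1 // => j _; rewrite (nb im) /= mulr0.
Qed.

Lemma L_d (s : 'I_d -> 'I_d -> C) m n :
  (\sum_i \sum_j s i j *: delta_mx j i) m n = s n m.
Proof.
rewrite (dsumE s (fun i j => j) (fun i j => i)) /=.
rewrite (sum1 (fun i => \sum_j s i j * ((m == j) && (n == i))%:R) n) => [|i im].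
  rewrite (sum1 _ m) => [|j jn]; first by rewrite !eqxx mulr1.
  by rewrite (nb jn) /= mulr0.
by rewrite big1 // => j _; rewrite (nb im) andbF mulr0.
Qed.

Lemma L_diag (r : 'I_d -> C) m n :
  (\sum_k r k *: delta_mx k k) m n = r m * (n == m)%:R.
Proof.
rewrite summxE (sum1 _ m) => [|k km]; first by rewrite !mxE eqxx.
by rewrite !mxE (nb km) /= mulr0.
Qed.

Lemma entry_sum (r : 'I_d -> C) (be x y : 'I_d -> 'I_d -> C) m n :
  (\sum_k r k *: delta_mx k k +
   \sum_i \sum_j (be i j *: (delta_mx i i + delta_mx j j) + x i j *: delta_mx i j
                  + y i j *: delta_mx j i)) m n
  = (r m + \sum_j be m j + \sum_i be i m) * (n == m)%:R + x m n + y n m.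
Proof.
have -> : \sum_i \sum_j (be i j *: (delta_mx i i + delta_mx j j) + x i j *: delta_mx i j
                  + y i j *: delta_mx j i) =
   \sum_i \sum_j be i j *: delta_mx i i + \sum_i \sum_j be i j *: delta_mx j j
   + \sum_i \sum_j x i j *: delta_mx i j + \sum_i \sum_j y i j *: delta_mx j i.
  rewrite -!big_split; apply: eq_bigr => i _; rewrite -!big_split; apply: eq_bigr => j _.
  by rewrite scalerDr.
by rewrite !mxE L_diag L_a L_b L_c L_d !mulrDl !addrA.
Qed.

Lemma hn2 (z : C) : `|z / 2| = `|z| / 2.
Proof. by rewrite normrM normfV normr_nat. Qed.

Theorem main_gen (A B : 'M[C]_d) :
  (forall i : 'I_d, A i i = B i i) ->
  entrywise_nonneg A ->
  psd B ->
  (forall i j : 'I_d, `|B i j| ^+ 2 <= A i j * A j i) ->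
  diag_dominant B ->
  PCP2 A B.
Proof.
move=> hd hA hB hAB hD.
pose cf (i j : 'I_d) := if i == j then 0 else B i j / 2.
pose af (i j : 'I_d) := if i == j then 0 else A i j / 2.
pose ag (i j : 'I_d) := if i == j then 0 else A j i / 2.
pose be (i j : 'I_d) : C := `|cf i j|.
pose rr (k : 'I_d) := B k k - \sum_j be k j - \sum_i be i k.
have eA : A = \sum_k rr k *: delta_mx k k + \sum_i \sum_j (be i j *: (delta_mx i i + delta_mx j j)
     + af i j *: delta_mx i j + ag i j *: delta_mx j i).
  apply/matrixP => m n; rewrite entry_sum.
  case: (eqVneq n m) => [->|nm]; rewrite /af /ag.
    by rewrite !eqxx mulr1 !addr0 /rr hd; ring.
  by rewrite (negbTE nm) (nb nm) mulr0 add0r -splitr.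
have eB : B = \sum_k rr k *: delta_mx k k + \sum_i \sum_j (be i j *: (delta_mx i i + delta_mx j j)
     + cf i j *: delta_mx i j + (cf i j)^* *: delta_mx j i).
  apply/matrixP => m n; rewrite entry_sum.
  case: (eqVneq n m) => [->|nm]; rewrite /cf.
    by rewrite !eqxx mulr1 conjC0 !addr0 /rr; ring.
  rewrite (negbTE nm) (nb nm) mulr0 add0r.
  rewrite rmorphM /= fmorphV /= conjC_nat -(psd_herm _ hB) -splitr //.
rewrite {1}eA {1}eB; apply: PCP2_add.
  apply: PCP2_sum => k; apply: PCP2_diag.
  have S1 : \sum_j be k j = (\sum_(j < d | j != k) `|B k j|) / 2.
    rewrite mulr_suml [RHS]big_mkcond /=; apply: eq_bigr => j _; rewrite /be /cf.
    case: (eqVneq j k) => [->|jk]; first by rewrite /= normr0.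
    by rewrite /= hn2.
  have S2 : \sum_i be i k = (\sum_(i < d | i != k) `|B i k|) / 2.
    rewrite mulr_suml [RHS]big_mkcond /=; apply: eq_bigr => j _; rewrite /be /cf.
    case: (eqVneq j k) => [->|jk]; first by rewrite /= normr0.
    by rewrite /= hn2.
  have [h1 h2] := hD k.
  have nk : `|B k k| = B k k by rewrite ger0_norm // psd_diag.
  rewrite nk in h1 h2; rewrite /rr S1 S2.
  set X := \sum_(j < d | j != k) `|B k j|.
  set Y := \sum_(j < d | j != k) `|B j k|.
  rewrite -addrA -opprD subr_ge0 [leRHS]splitr.
  by apply: lerD; rewrite ler_pM2r ?invr_gt0 ?ltr0n.
apply: PCP2_sum => i; apply: PCP2_sum => j.
have [<-|ij] := eqVneq i j.
  rewrite /be /cf /af /ag eqxx normr0 conjC0 !scale0r !addr0; exact: PCP2_0.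
rewrite /be /cf /af /ag (negbTE ij); apply: PCP2_off => //.
- by apply: divr_ge0 => //; apply: hA.
- by apply: divr_ge0 => //; apply: hA.
rewrite hn2 expr_div_n mulrACA -invfM -expr2.
by apply: ler_wpM2r => //; rewrite invr_ge0 exprn_ge0.
Qed.
End Gen.

Local Open Scope complex_scope.

Theorem lemma3p8 (R : realType) (d : nat) (A B : 'M[R[i]]_d) :
  (forall i : 'I_d, A i i = B i i) ->
  entrywise_nonneg A ->
  psd B ->
  (forall i j : 'I_d, `|B i j| ^+ 2 <= A i j * A j i) ->
  diag_dominant B ->
  PCP2 A B.
Proof. exact: main_gen. Qed.
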